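(* Let $X,Y$ be compact metric spaces with metrics $d,d'$, and let $f\colon X\to X$, $g\colon Y\to Y$ be continuous maps. Let $C\in\mathcal{C}(f)$, $D\in\mathcal{D}(C)$, $C'\in\mathcal{C}(g)$, and let $h\colon C\to C'$ be a homeomorphism with $h\circ f|_C=g|_{C'}\circ h$ (then $h(D)\in\mathcal{D}(C')$). Let $\mathcal{F},\mathcal{G}$ be full Furstenberg families, $n\ge2$ and $\delta>0$. If $g$ has the limit shadowing property and there is an $(\mathcal{F},\mathcal{G})$-$\delta$-scrambled $n$-tuple $(a_1,\dots,a_n)\in[V^s(D)]^n$ for $f$, then there are $\delta'>0$ and an $(\mathcal{F},\mathcal{G})$-$\delta'$-scrambled $n$-tuple $(b_1,\dots,b_n)\in[V^s(h(D))]^n$ for $g$.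
   Context: The following is defined for any continuous self-map $f$ of a compact metric space $(X,d)$ (and analogously for $g$ on $(Y,d')$). A $\delta$-chain of $f$ ($\delta>0$) is a finite sequence $(x_i)_{i=0}^k$, $k\ge1$, with $d(f(x_i),x_{i+1})\le\delta$ for $0\le i\le k-1$; it is a $\delta$-cycle if $x_0=x_k$, with length $k$. Write $x\to y$ if for every $\delta>0$ there is a $\delta$-chain from $x$ to $y$. Let $CR(f)=\{x\colon x\to x\}$; on $CR(f)$ let $x\leftrightarrow y$ iff $x\to y$ and $y\to x$; its classes are the chain components, forming $\mathcal{C}(f)$. For $C\in\mathcal{C}(f)$, $\delta>0$, let $m=m(C,\delta)$ be the gcd of the lengths of all $\delta$-cycles of $f|_C$, and for $x,y\in C$ let $x\sim_{C,\delta}y$ iff there is a $\delta$-chain of $f|_C$ from $x$ to $y$ of length divisible by $m$; $\mathcal{D}(C,\delta)$ is the set of its equivalence classes. Let $x\sim_C y$ iff $x\sim_{C,\delta}y$ for all $\delta>0$; $\mathcal{D}(C)$ is its set of classes. For $D\in\mathcal{D}(C)$, $D_\delta$ is the element of $\mathcal{D}(C,\delta)$ containing $D$. $W^s(C)=\{x\colon\lim_i d(f^i(x),C)=0\}$ and $V^s(D)=\bigcap_{\delta>0}\{x\in W^s(C)\colon\lim_i d(f^i(x),f^i(D_\delta))=0\}$. $g$ has the limit shadowing property if for every sequence $(y_i)_{i\ge0}$ in $Y$ with $\lim_i d'(g(y_i),y_{i+1})=0$ there is $y\in Y$ with $\lim_i d'(g^i(y),y_i)=0$. A Furstenberg family is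 a nonempty proper family $\mathcal{F}\subsetneq 2^{\mathbb{N}_0}$ closed under taking supersets; it is full if $\{i\in A\colon i\ge n\}\in\mathcal{F}$ for all $A\in\mathcal{F}$, $n\ge0$. For $x_1,\dots,x_n\in X$, $r>0$: $S_f(x_1,\dots,x_n;r)=\{i\in\mathbb{N}_0\colon\min_{j<k}d(f^i(x_j),f^i(x_k))>r\}$ and $T_f(x_1,\dots,x_n;r)=\{i\in\mathbb{N}_0\colon\max_{j<k}d(f^i(x_j),f^i(x_k))<r\}$. $(x_1,\dots,x_n)$ is $(\mathcal{F},\mathcal{G})$-$\delta$-scrambled for $f$ if $S_f(x_1,\dots,x_n;\delta)\in\mathcal{F}$ and $T_f(x_1,\dots,x_n;\epsilon)\in\mathcal{G}$ for all $\epsilon>0$ (analogously for $g$ with $d'$). *)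

(* Defs.v *)
From Stdlib Require Import Reals Lra Lia List.
Open Scope R_scope.

Section Defs.
Context {X : Type} (d : X -> X -> R).

Definition is_metric : Prop :=
  (forall x y, 0 <= d x y) /\ (forall x y, d x y = 0 <-> x = y) /\
  (forall x y, d x y = d y x) /\ (forall x y z, d x z <= d x y + d y z).

Definition open_set (U : X -> Prop) : Prop :=
  forall x, U x -> exists r, 0 < r /\ forall y, d x y < r -> U y.

Definition compact_space : Prop :=
  forall (I : Type) (U : I -> X -> Prop),
    (forall i, open_set (U i)) -> (forall x, exists i, U i x) ->
    exists l : list I, forall x, exists i, In i l /\ U i x.

Definition continuous_map (f : X -> X) : Prop :=
  forall x eps, 0 < eps -> exists del, 0 < del /\
    forall y, d x y < del -> d (f x) (f y) < eps.

Definition chain_in (f : X -> X) (C : X -> Prop) (del : R) (x y : X) (k : nat) : Prop :=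
  (1 <= k)%nat /\ exists s : nat -> X, s O = x /\ s k = y /\
    (forall i, (i <= k)%nat -> C (s i)) /\
    (forall i, (i < k)%nat -> d (f (s i)) (s (S i)) <= del).

Definition chains_to (f : X -> X) (x y : X) : Prop :=
  forall del, 0 < del -> exists k, chain_in f (fun _ => True) del x y k.

Definition CR (f : X -> X) (x : X) : Prop := chains_to f x x.

Definition chain_component (f : X -> X) (C : X -> Prop) : Prop :=
  exists x, CR f x /\
    forall y, C y <-> (CR f y /\ chains_to f x y /\ chains_to f y x).

Definition cycle_gcd (f : X -> X) (C : X -> Prop) (del : R) (m : nat) : Prop :=
  (forall x k, chain_in f C del x x k -> Nat.divide m k) /\
  (forall m', (forall x k, chain_in f C del x x k -> Nat.divide m' k) -> Nat.divide m' m).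

Definition sim_Cdel (f : X -> X) (C : X -> Prop) (del : R) (x y : X) : Prop :=
  C x /\ C y /\ exists m, cycle_gcd f C del m /\
    exists k, chain_in f C del x y k /\ Nat.divide m k.

Definition sim_C (f : X -> X) (C : X -> Prop) (x y : X) : Prop :=
  forall del, 0 < del -> sim_Cdel f C del x y.

Definition D_class (f : X -> X) (C D : X -> Prop) : Prop :=
  exists x, C x /\ forall y, D y <-> (C y /\ sim_C f C x y).

(* D_delta : the element of D(C, delta) containing D *)
Definition D_delta (f : X -> X) (C D : X -> Prop) (del : R) (y : X) : Prop :=
  C y /\ exists x, D x /\ sim_Cdel f C del x y.

Definition dist_to_sets_tends_0 (z : nat -> X) (A : nat -> X -> Prop) : Prop :=
  forall eps, 0 < eps -> exists N, forall i, (N <= i)%nat ->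
    exists a, A i a /\ d (z i) a < eps.

Definition Ws (f : X -> X) (C : X -> Prop) (x : X) : Prop :=
  dist_to_sets_tends_0 (fun i => Nat.iter i f x) (fun _ => C).

Definition Vs (f : X -> X) (C D : X -> Prop) (x : X) : Prop :=
  forall del, 0 < del -> Ws f C x /\
    dist_to_sets_tends_0 (fun i => Nat.iter i f x)
      (fun i y => exists w, D_delta f C D del w /\ y = Nat.iter i f w).

Definition limit_shadowing (g : X -> X) : Prop :=
  forall y : nat -> X,
    (forall eps, 0 < eps -> exists N, forall i, (N <= i)%nat -> d (g (y i)) (y (S i)) < eps) ->
    exists z, forall eps, 0 < eps -> exists N, forall i, (N <= i)%nat ->
      d (Nat.iter i g z) (y i) < eps.

(* S_f(x_1..x_n; r) and T_f(x_1..x_n; r), tuple indexed by 0..n-1 *)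
Definition S_set (f : X -> X) (n : nat) (a : nat -> X) (r : R) (i : nat) : Prop :=
  forall j k, (j < k)%nat -> (k < n)%nat -> d (Nat.iter i f (a j)) (Nat.iter i f (a k)) > r.

Definition T_set (f : X -> X) (n : nat) (a : nat -> X) (r : R) (i : nat) : Prop :=
  forall j k, (j < k)%nat -> (k < n)%nat -> d (Nat.iter i f (a j)) (Nat.iter i f (a k)) < r.

Definition scrambled (f : X -> X) (F G : (nat -> Prop) -> Prop)
  (n : nat) (a : nat -> X) (del : R) : Prop :=
  F (S_set f n a del) /\ forall eps, 0 < eps -> G (T_set f n a eps).

End Defs.

Definition furstenberg_family (F : (nat -> Prop) -> Prop) : Prop :=
  (exists A, F A) /\ (exists A, ~ F A) /\
  (forall A B : nat -> Prop, F A -> (forall i, A i -> B i) -> F B).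

Definition full_family (F : (nat -> Prop) -> Prop) : Prop :=
  furstenberg_family F /\
  forall A n, F A -> F (fun i => A i /\ (n <= i)%nat).

Definition homeo_between {X Y : Type} (d : X -> X -> R) (d' : Y -> Y -> R)
  (C : X -> Prop) (C' : Y -> Prop) (h : X -> Y) (hinv : Y -> X) : Prop :=
  (forall x, C x -> C' (h x)) /\ (forall y, C' y -> C (hinv y)) /\
  (forall x, C x -> hinv (h x) = x) /\ (forall y, C' y -> h (hinv y) = y) /\
  (forall x eps, C x -> 0 < eps -> exists del, 0 < del /\
     forall z, C z -> d x z < del -> d' (h x) (h z) < eps) /\
  (forall y eps, C' y -> 0 < eps -> exists del, 0 < del /\
     forall z, C' z -> d' y z < del -> d (hinv y) (hinv z) < eps).

(* Main.v *)
Require Import Defs.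
From Stdlib Require Import Reals Lra Lia List Arith Classical ClassicalEpsilon.
Open Scope R_scope.

Lemma m_refl {X} (d : X -> X -> R) x : is_metric d -> d x x = 0.
Proof. intros (_&H&_). apply H; auto. Qed.
Lemma m_sym {X} (d : X -> X -> R) x y : is_metric d -> d x y = d y x.
Proof. intros (_&_&H&_). auto. Qed.
Lemma m_tri {X} (d : X -> X -> R) x y z : is_metric d -> d x z <= d x y + d y z.
Proof. intros (_&_&_&H). auto. Qed.
Lemma m_pos {X} (d : X -> X -> R) x y : is_metric d -> 0 <= d x y.
Proof. intros (H&_). auto. Qed.

Definition tends (u : nat -> R) := forall eps, 0 < eps -> exists N, forall i, (N <= i)%nat -> u i < eps.

Lemma unif_N (n : nat) (Q : nat -> nat -> Prop) :
  (forall j, (j < n)%nat -> exists N, forall i, (N <= i)%nat -> Q j i) ->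
  exists N, forall j, (j < n)%nat -> forall i, (N <= i)%nat -> Q j i.
Proof.
  induction n as [|n IH]; intros H.
  - exists O. intros; lia.
  - destruct IH as [N1 HN1]. { intros j Hj. apply H. lia. }
    destruct (H n ltac:(lia)) as [N2 HN2].
    exists (Nat.max N1 N2). intros j Hj i Hi.
    destruct (Nat.eq_dec j n) as [->|Hne].
    + apply HN2. lia.
    + apply HN1; lia.
Qed.

Lemma choice_fun {A B : Type} (P : A -> B -> Prop) :
  (forall a, exists b, P a b) -> exists g : A -> B, forall a, P a (g a).
Proof.
  intros H. exists (fun a => proj1_sig (constructive_indefinite_description _ (H a))).
  intros a. exact (proj2_sig (constructive_indefinite_description _ (H a))).
Qed.

Lemma approx_seq {X} (d : X -> X -> R) (xs : nat -> X) (A : X -> Prop) c0 :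
  A c0 -> dist_to_sets_tends_0 d xs (fun _ => A) ->
  exists c : nat -> X, (forall i, A (c i)) /\ tends (fun i => d (xs i) (c i)).
Proof.
  intros Hc0 Ht.
  assert (Hex : forall i, exists c, A c /\ forall k, (k <= i)%nat ->
     (exists c', A c' /\ d (xs i) c' < / (INR k + 1)) -> d (xs i) c < / (INR k + 1)).
  { intros i.
    assert (G : forall m, exists c, A c /\ forall k, (k <= m)%nat ->
     (exists c', A c' /\ d (xs i) c' < / (INR k + 1)) -> d (xs i) c < / (INR k + 1)).
    { induction m as [|m IH].
      - destruct (classic (exists c', A c' /\ d (xs i) c' < / (INR 0 + 1))) as [[c' [H1 H2]]|Hn].
        + exists c'. split; auto. intros k Hk _. replace k with O by lia. auto.
        + exists c0. split; auto. intros k Hk Hc. replace k with O in Hc by lia. tauto.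
      - destruct (classic (exists c', A c' /\ d (xs i) c' < / (INR (S m) + 1))) as [[c' [H1 H2]]|Hn].
        + exists c'. split; auto. intros k Hk _.
          eapply Rlt_le_trans; [exact H2|]. apply Rinv_le_contravar.
          * pose proof (pos_INR k); lra.
          * apply Rplus_le_compat_r. apply le_INR. auto.
        + destruct IH as [c [H1 H2]]. exists c. split; auto. intros k Hk Hc.
          destruct (Nat.eq_dec k (S m)) as [->|]; [tauto|]. apply H2; auto. lia. }
    apply G. }
  destruct (choice_fun _ Hex) as [c Hc].
  exists c. split; [intros i; apply Hc|].
  intros eps Heps.
  destruct (archimed_cor1 eps Heps) as [K [HK1 HK2]].
  destruct (Ht (/ (INR K + 1))) as [N HN].
  { apply Rinv_0_lt_compat. pose proof (pos_INR K); lra. }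
  exists (Nat.max N K). intros i Hi.
  destruct (HN i ltac:(lia)) as [a [Ha1 Ha2]].
  eapply Rlt_trans. apply (proj2 (Hc i) K ltac:(lia)). exists a; auto.
  eapply Rle_lt_trans; [|exact HK1]. apply Rinv_le_contravar.
  apply lt_0_INR; auto. lra.
Qed.

Lemma gcd_exists (P : nat -> Prop) :
  exists m, (forall k, P k -> Nat.divide m k) /\
    (forall m', (forall k, P k -> Nat.divide m' k) -> Nat.divide m' m).
Proof.
  destruct (classic (exists k, P k /\ k <> O)) as [[k0 [Hk0 Hk0']]|Hn].
  - set (T := fun t => (0 < t)%nat /\ forall c, (forall k, P k -> Nat.divide c k) -> Nat.divide c t).
    assert (HT : T k0). { split. lia. intros c Hc. auto. }
    assert (Hmin : forall t, T t -> exists m, T m /\ forall t', T t' -> (m <= t')%nat).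
    { intros t. induction t as [t IH] using lt_wf_ind. intros Ht.
      destruct (classic (exists t', T t' /\ (t' < t)%nat)) as [[t' [H1 H2]]|Hn].
      - apply (IH t'); auto.
      - exists t. split; auto. intros t' Ht'. destruct (Nat.lt_ge_cases t' t); auto.
        exfalso. apply Hn. eauto. }
    destruct (Hmin k0 HT) as [m [[Hm1 Hm2] Hm3]].
    exists m. split; auto.
    intros k Hk.
    assert (Tg : T (Nat.gcd m k)).
    { split.
      - destruct (Nat.eq_dec (Nat.gcd m k) 0) as [E|E]; [|lia].
        apply Nat.gcd_eq_0 in E. lia.
      - intros c Hc. apply Nat.gcd_greatest; auto. }
    pose proof (Hm3 _ Tg).
    assert (Nat.gcd m k <= m)%nat by (apply Nat.divide_pos_le; auto; apply Nat.gcd_divide_l).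
    assert (E : Nat.gcd m k = m) by lia. rewrite <- E. apply Nat.gcd_divide_r.
  - exists O. split.
    + intros k Hk. assert (k = O). { apply NNPP. intro. apply Hn. eauto. } subst. apply Nat.divide_refl.
    + intros. apply Nat.divide_0_r.
Qed.

Lemma chain_mono {X} (d : X -> X -> R) f C del1 del2 x y k :
  chain_in d f C del1 x y k -> del1 <= del2 -> chain_in d f C del2 x y k.
Proof.
  intros [Hk [s (H0&H1&H2&H3)]] Hle. split; auto. exists s. repeat split; auto.
  intros i Hi. specialize (H3 i Hi). lra.
Qed.

Lemma chain_concat {X} (d : X -> X -> R) f C del x y z k l :
  chain_in d f C del x y k -> chain_in d f C del y z l -> chain_in d f C del x z (k + l).
Proof.
  intros [Hk [s (H0&H1&H2&H3)]] [Hl [t (G0&G1&G2&G3)]]. split; [lia|].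
  exists (fun i => if Nat.leb i k then s i else t (i - k)%nat).
  repeat split.
  - simpl. auto.
  - destruct (Nat.leb (k + l) k) eqn:E.
    + apply Nat.leb_le in E. assert (l = O) by lia. lia.
    + replace (k + l - k)%nat with l by lia. auto.
  - intros i Hi. destruct (Nat.leb i k) eqn:E.
    + apply Nat.leb_le in E. auto.
    + apply Nat.leb_gt in E. apply G2. lia.
  - intros i Hi. destruct (Nat.leb i k) eqn:E; destruct (Nat.leb (S i) k) eqn:E'.
    + apply Nat.leb_le in E. apply H3. apply Nat.leb_le in E'. lia.
    + apply Nat.leb_le in E. apply Nat.leb_gt in E'. assert (i = k) by lia. subst i.
      rewrite H1, <- G0. replace (S k - k)%nat with 1%nat by lia. apply G3. lia.
    + apply Nat.leb_gt in E. apply Nat.leb_le in E'. lia.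
    + apply Nat.leb_gt in E. replace (S i - k)%nat with (S (i - k)) by lia. apply G3. lia.
Qed.

Lemma chains_to_trans {X} (d : X -> X -> R) f x y z :
  chains_to d f x y -> chains_to d f y z -> chains_to d f x z.
Proof.
  intros H1 H2 del Hd. destruct (H1 del Hd) as [k Hk]. destruct (H2 del Hd) as [l Hl].
  exists (k + l)%nat. eapply chain_concat; eauto.
Qed.

Lemma chain_end_move {X} (d : X -> X -> R) f del e x y z k :
  is_metric d -> chain_in d f (fun _ => True) del x y k -> d y z <= e ->
  chain_in d f (fun _ => True) (del + e) x z k.
Proof.
  intros Hm [Hk [s (H0&H1&H2&H3)]] Hyz. split; auto.
  exists (fun i => if Nat.eqb i k then z else s i). repeat split.
  - destruct (Nat.eqb 0 k) eqn:E; [apply Nat.eqb_eq in E; lia|auto].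
  - rewrite Nat.eqb_refl. auto.
  - intros i Hi. destruct (Nat.eqb i k) eqn:E; [apply Nat.eqb_eq in E; lia|].
    destruct (Nat.eqb (S i) k) eqn:E'.
    + apply Nat.eqb_eq in E'. subst k. pose proof (H3 i Hi). rewrite H1 in H.
      pose proof (m_tri d (f (s i)) y z Hm). lra.
    + pose proof (H3 i Hi). pose proof (m_pos d y z Hm). lra.
Qed.

Lemma chain_start_move {X} (d : X -> X -> R) f del e x y z k :
  is_metric d -> chain_in d f (fun _ => True) del x y k -> d (f z) (f x) <= e ->
  chain_in d f (fun _ => True) (del + e) z y k.
Proof.
  intros Hm [Hk [s (H0&H1&H2&H3)]] Hz. split; auto.
  exists (fun i => if Nat.eqb i 0 then z else s i). repeat split.
  - destruct (Nat.eqb k 0) eqn:E; [apply Nat.eqb_eq in E; lia|auto].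
  - intros i Hi. simpl. destruct (Nat.eqb i 0) eqn:E.
    + apply Nat.eqb_eq in E. subst i. pose proof (H3 O Hi). rewrite H0 in H.
      pose proof (m_tri d (f z) (f x) (s 1%nat) Hm). lra.
    + pose proof (H3 i Hi). pose proof (m_pos d (f z) (f x) Hm). lra.
Qed.

Definition closedK {X} (d : X -> X -> R) (K : X -> Prop) :=
  forall z, (forall r, 0 < r -> exists c, K c /\ d z c < r) -> K z.

Lemma cc_closed {X} (d : X -> X -> R) f C :
  is_metric d -> continuous_map d f -> chain_component d f C -> closedK d C.
Proof.
  intros Hm Hf [x0 [Hx0 HC]] z Hz.
  assert (A : chains_to d f x0 z).
  { intros del Hd. destruct (Hz (del/2) ltac:(lra)) as [c [Hc1 Hc2]].
    apply HC in Hc1. destruct Hc1 as (_&Hxc&_).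
    destruct (Hxc (del/2) ltac:(lra)) as [k Hk]. exists k.
    eapply chain_mono. eapply chain_end_move; eauto. rewrite m_sym by auto. left; eauto. lra. }
  assert (B : chains_to d f z x0).
  { intros del Hd. destruct (Hf z (del/2) ltac:(lra)) as [rho [Hr1 Hr2]].
    destruct (Hz rho Hr1) as [c [Hc1 Hc2]].
    apply HC in Hc1. destruct Hc1 as (_&_&Hcx).
    destruct (Hcx (del/2) ltac:(lra)) as [k Hk]. exists k.
    eapply chain_mono. eapply chain_start_move; eauto. left; eauto. lra. }
  apply HC. repeat split; auto. eapply chains_to_trans; eauto.
Qed.

Lemma chain_len1 {X} (d : X -> X -> R) f del x :
  is_metric d -> 0 < del -> chain_in d f (fun _ => True) del x (f x) 1.
Proof.
  intros Hm Hd. split; auto. exists (fun i => if Nat.eqb i 0 then x else f x).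
  repeat split. intros i Hi. replace i with O by lia. simpl. rewrite m_refl by auto. lra.
Qed.

Lemma chain_shift {X} (d : X -> X -> R) f del e rho x y k :
  is_metric d -> chain_in d f (fun _ => True) del x y k -> (2 <= k)%nat -> del < rho ->
  (forall z, d (f x) z < rho -> d (f (f x)) (f z) < e) -> 0 <= e ->
  chain_in d f (fun _ => True) (del + e) (f x) y (k - 1).
Proof.
  intros Hm [Hk [s (H0&H1&H2&H3)]] Hk2 Hdr Hc He. split; [lia|].
  exists (fun i => if Nat.eqb i 0 then f x else s (S i)). repeat split.
  - destruct (Nat.eqb (k-1) 0) eqn:E; [apply Nat.eqb_eq in E; lia|]. replace (S (k-1)) with k by lia. auto.
  - intros i Hi. simpl. destruct (Nat.eqb i 0) eqn:E.
    + apply Nat.eqb_eq in E. subst i.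
      pose proof (H3 O ltac:(lia)). pose proof (H3 1%nat ltac:(lia)). rewrite H0 in H.
      assert (d (f (f x)) (f (s 1%nat)) < e) by (apply Hc; lra).
      pose proof (m_tri d (f (f x)) (f (s 1%nat)) (s 2%nat) Hm). lra.
    + pose proof (H3 (S i) ltac:(lia)). lra.
Qed.

Lemma chains_to_f {X} (d : X -> X -> R) f c :
  is_metric d -> continuous_map d f -> chains_to d f c c -> chains_to d f (f c) c.
Proof.
  intros Hm Hf Hc del Hd.
  destruct (Hf (f c) (del/2) ltac:(lra)) as [rho [Hr1 Hr2]].
  destruct (Hc (Rmin (del/2) (rho/2)) ltac:(apply Rmin_glb_lt; lra)) as [k Hk].
  pose proof (chain_concat _ _ _ _ _ _ _ _ _ Hk Hk) as Hkk.
  exists (k + k - 1)%nat. eapply chain_mono.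
  eapply (chain_shift d f _ (del/2) rho); eauto.
  destruct Hk; lia.
  pose proof (Rmin_r (del/2) (rho/2)); lra. lra.
  pose proof (Rmin_l (del/2) (rho/2)); lra.
Qed.

Lemma cc_inv {X} (d : X -> X -> R) f C c :
  is_metric d -> continuous_map d f -> chain_component d f C -> C c -> C (f c).
Proof.
  intros Hm Hf [x0 [Hx0 HC]] Hc. apply HC in Hc. destruct Hc as (Hcc&Hxc&Hcx).
  assert (A : chains_to d f c (f c)).
  { intros del Hd. exists 1%nat. apply chain_len1; auto. }
  assert (B := chains_to_f d f c Hm Hf Hcc).
  apply HC. repeat split.
  - eapply chains_to_trans; eauto.
  - eapply chains_to_trans; eauto.
  - eapply chains_to_trans; eauto.
Qed.

Lemma cc_iter {X} (d : X -> X -> R) f C c i :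
  is_metric d -> continuous_map d f -> chain_component d f C -> C c -> C (Nat.iter i f c).
Proof.
  intros Hm Hf HC Hc. induction i; simpl; auto. apply (cc_inv d f C); auto.
Qed.

Lemma cc_nonempty {X} (d : X -> X -> R) f C : chain_component d f C -> exists c, C c.
Proof. intros [x0 [Hx0 HC]]. exists x0. apply HC. repeat split; auto. Qed.

Definition UC {X Y} (d : X -> X -> R) (d' : Y -> Y -> R) (K : X -> Prop) (phi : X -> Y) :=
  forall eps, 0 < eps -> exists del, 0 < del /\
    forall x z, K x -> K z -> d x z < del -> d' (phi x) (phi z) < eps.

Lemma unif_cont {X Y} (d : X -> X -> R) (d' : Y -> Y -> R) K phi :
  is_metric d -> is_metric d' -> compact_space d -> closedK d K ->
  (forall x eps, K x -> 0 < eps -> exists del, 0 < del /\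
     forall z, K z -> d x z < del -> d' (phi x) (phi z) < eps) ->
  UC d d' K phi.
Proof.
  intros Hm Hm' Hcp Hcl Hc eps He.
  set (I := option {x : X | K x}).
  set (dl := fun p : {x : X | K x} =>
     proj1_sig (constructive_indefinite_description _ (Hc (proj1_sig p) (eps/2) (proj2_sig p) ltac:(lra)))).
  assert (Hdl : forall p, 0 < dl p /\ forall z, K z -> d (proj1_sig p) z < dl p ->
            d' (phi (proj1_sig p)) (phi z) < eps/2).
  { intros p. unfold dl. destruct (constructive_indefinite_description _ _) as [r Hr]. exact Hr. }
  set (U := fun (i : I) (z : X) => match i with
       | Some p => d (proj1_sig p) z < dl p / 2
       | None => exists r, 0 < r /\ forall c, K c -> r <= d z c end).
  destruct (Hcp I U) as [l Hl].
  - intros [p|] x Hx; simpl in Hx |- *.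
    + exists (dl p / 2 - d (proj1_sig p) x). split; [lra|]. intros y Hy.
      pose proof (m_tri d (proj1_sig p) x y Hm). lra.
    + destruct Hx as [r [Hr1 Hr2]]. exists (r/2). split; [lra|]. intros y Hy.
      exists (r/2). split; [lra|]. intros c Hc'. pose proof (Hr2 c Hc').
      pose proof (m_tri d x y c Hm). lra.
  - intros x. destruct (classic (K x)) as [Hx|Hx].
    + exists (Some (exist _ x Hx)). change (d x x < dl (exist _ x Hx) / 2). rewrite m_refl by auto. pose proof (proj1 (Hdl (exist _ x Hx))). lra.
    + exists None. simpl. apply NNPP. intro Hn. apply Hx. apply Hcl.
      intros r Hr. apply NNPP. intro Hn2. apply Hn. exists r. split; auto.
      intros c Hc'. apply Rnot_lt_le. intro. apply Hn2. eauto.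
  - set (mn := fold_right (fun (i : I) acc => match i with Some p => Rmin (dl p / 2) acc | None => acc end) 1 l).
    assert (Hmn : 0 < mn /\ forall p, In (Some p) l -> mn <= dl p / 2).
    { unfold mn. clear Hl. induction l as [|[p|] l IH]; simpl.
      - split; [lra|]. tauto.
      - destruct IH as [IH1 IH2]. split.
        + apply Rmin_glb_lt; auto. pose proof (proj1 (Hdl p)); lra.
        + intros q [E|E].
          * inversion E; subst. apply Rmin_l.
          * eapply Rle_trans; [apply Rmin_r|]. auto.
      - destruct IH as [IH1 IH2]. split; auto. intros q [E|E]; [discriminate|auto]. }
    destruct Hmn as [Hmn1 Hmn2].
    exists mn. split; auto. intros x z Hx Hz Hxz.
    destruct (Hl x) as [[p|] [Hi Hu]]; cbv beta iota delta [U] in Hu.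
    + pose proof (Hmn2 p Hi).
      assert (A1 : d' (phi (proj1_sig p)) (phi x) < eps/2). { apply Hdl; auto. lra. }
      assert (A2 : d' (phi (proj1_sig p)) (phi z) < eps/2).
      { apply Hdl; auto. pose proof (m_tri d (proj1_sig p) x z Hm). lra. }
      pose proof (m_tri d' (phi x) (phi (proj1_sig p)) (phi z) Hm') as T.
      rewrite (m_sym d' (phi x) (phi (proj1_sig p))) in T by auto. lra.
    + destruct Hu as [r [Hr1 Hr2]]. specialize (Hr2 x Hx). rewrite m_refl in Hr2 by auto. lra.
Qed.

Lemma m_tri3 {X} (d : X -> X -> R) x y z w : is_metric d -> d x w <= d x y + d y z + d z w.
Proof. intros Hm. pose proof (m_tri d x y w Hm). pose proof (m_tri d y z w Hm). lra. Qed.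

Lemma conj_iter {X Y} (f : X -> X) (g : Y -> Y) (C : X -> Prop) h :
  (forall x, C x -> h (f x) = g (h x)) -> (forall x, C x -> C (f x)) ->
  forall i x, C x -> C (Nat.iter i f x) /\ h (Nat.iter i f x) = Nat.iter i g (h x).
Proof.
  intros Hc Hi i x Hx. induction i as [|i [IH1 IH2]]; simpl; auto.
  split; auto. rewrite Hc by auto. congruence.
Qed.

Lemma construct {X Y} (d : X -> X -> R) (d' : Y -> Y -> R) f g C h c0 a :
  is_metric d -> is_metric d' -> UC d d (fun _ => True) f -> UC d d' C h ->
  (forall x, C x -> C (f x)) -> (forall x, C x -> h (f x) = g (h x)) ->
  limit_shadowing d' g -> C c0 -> Ws d f C a ->
  exists (c : nat -> X) (b : Y), (forall i, C (c i)) /\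
    tends (fun i => d (Nat.iter i f a) (c i)) /\
    tends (fun i => d' (Nat.iter i g b) (h (c i))).
Proof.
  intros Hm Hm' UCf UCh Hinv Hconj Hls Hc0 Hws.
  destruct (approx_seq d _ C c0 Hc0 Hws) as [c [Hc1 Hc2]].
  destruct (Hls (fun i => h (c i))) as [b Hb].
  - intros eps He. destruct (UCh eps He) as [rho [Hr1 Hr2]].
    destruct (UCf (rho/2) ltac:(lra)) as [sig [Hs1 Hs2]].
    destruct (Hc2 (Rmin sig (rho/2)) ltac:(apply Rmin_glb_lt; lra)) as [N HN].
    exists N. intros i Hi. rewrite <- Hconj by auto. apply Hr2; auto.
    pose proof (HN i Hi) as A1. pose proof (HN (S i) ltac:(lia)) as A2.
    pose proof (Rmin_l sig (rho/2)). pose proof (Rmin_r sig (rho/2)).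
    assert (A3 : d (f (Nat.iter i f a)) (f (c i)) < rho/2) by (apply Hs2; auto; lra).
    simpl in A2.
    pose proof (m_tri d (f (c i)) (f (Nat.iter i f a)) (c (S i)) Hm).
    rewrite (m_sym d (f (c i)) (f (Nat.iter i f a))) in H1 by auto. lra.
  - exists c, b. split; [auto|split]; [exact Hc2|exact Hb].
Qed.

Lemma chain_map {X Y} (d : X -> X -> R) (d' : Y -> Y -> R) f g C C' h del del' rho x y k :
  (forall x, C x -> C' (h x)) -> (forall x, C x -> C (f x)) -> (forall x, C x -> h (f x) = g (h x)) ->
  (forall x z, C x -> C z -> d x z < rho -> d' (h x) (h z) < del') -> del < rho ->
  chain_in d f C del x y k -> chain_in d' g C' del' (h x) (h y) k.
Proof.
  intros HhC Hinv Hconj Hr Hdr [Hk [s (H0&H1&H2&H3)]]. split; auto.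
  exists (fun i => h (s i)). repeat split.
  - congruence.
  - congruence.
  - intros i Hi. auto.
  - intros i Hi. rewrite <- Hconj by (apply H2; lia). left. apply Hr.
    apply Hinv, H2; lia. apply H2; lia. pose proof (H3 i Hi). lra.
Qed.

Lemma Ddelta_transfer {X Y} (d : X -> X -> R) (d' : Y -> Y -> R) f g C C' D h del' :
  UC d d' C h -> (forall x, C x -> C' (h x)) -> (forall x, C x -> C (f x)) ->
  (forall x, C x -> h (f x) = g (h x)) -> 0 < del' ->
  exists del, 0 < del /\ forall w, D_delta d f C D del w ->
    D_delta d' g C' (fun y => exists x, D x /\ y = h x) del' (h w).
Proof.
  intros UCh HhC Hinv Hconj Hd'.
  destruct (UCh del' Hd') as [rho [Hr1 Hr2]].
  exists (rho/2). split; [lra|].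
  intros w [Hw [x [Hx [HCx [HCw [m [[Hm1 Hm2] [k [Hk Hmk]]]]]]]]].
  split; auto. exists (h x). split; [eauto|].
  split; auto. split; auto.
  destruct (gcd_exists (fun k => exists y, chain_in d' g C' del' y y k)) as [m' [Hm'1 Hm'2]].
  exists m'. split.
  - split.
    + intros y l Hl. apply Hm'1. eauto.
    + intros m'' Hm''. apply Hm'2. intros l [y Hy]. eauto.
  - exists k. split.
    + apply (chain_map d d' f g C C' h (rho/2) del' rho); auto; lra.
    + apply Nat.divide_trans with m; auto. apply Hm2.
      intros z l Hl. apply Hm'1. exists (h z). apply (chain_map d d' f g C C' h (rho/2) del' rho); auto; lra.
Qed.

Lemma Vs_transfer {X Y} (d : X -> X -> R) (d' : Y -> Y -> R) f g C C' D h a c b :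
  is_metric d -> is_metric d' -> UC d d' C h -> (forall x, C x -> C' (h x)) -> (forall x, C x -> C (f x)) ->
  (forall x, C x -> h (f x) = g (h x)) ->
  Vs d f C D a -> (forall i, C (c i)) ->
  tends (fun i => d (Nat.iter i f a) (c i)) ->
  tends (fun i => d' (Nat.iter i g b) (h (c i))) ->
  Vs d' g C' (fun y => exists x, D x /\ y = h x) b.
Proof.
  intros Hm Hm' UCh HhC Hinv Hconj Hva Hc Ht1 Ht2 del' Hd'.
  destruct (Ddelta_transfer d d' f g C C' D h del' UCh HhC Hinv Hconj Hd') as [del [Hdel HD]].
  split.
  - intros eps He. destruct (Ht2 eps He) as [N HN]. exists N. intros i Hi.
    exists (h (c i)). auto.
  - intros eps He. destruct (UCh (eps/2) ltac:(lra)) as [rho [Hr1 Hr2]].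
    destruct (Ht1 (rho/2) ltac:(lra)) as [N1 HN1].
    destruct (proj2 (Hva del Hdel) (rho/2) ltac:(lra)) as [N2 HN2].
    destruct (Ht2 (eps/2) ltac:(lra)) as [N3 HN3].
    exists (Nat.max N1 (Nat.max N2 N3)). intros i Hi.
    destruct (HN2 i ltac:(lia)) as [y [[w [Hw Hy]] Hdy]]. subst y.
    pose proof (HN1 i ltac:(lia)) as A1. pose proof (HN3 i ltac:(lia)) as A3.
    assert (HCw : C w) by (destruct Hw; auto).
    destruct (conj_iter f g C h Hconj Hinv i w HCw) as [Hi1 Hi2].
    exists (Nat.iter i g (h w)). split; [eauto|].
    assert (A4 : d' (h (c i)) (h (Nat.iter i f w)) < eps/2).
    { apply Hr2; auto. pose proof (m_tri d (c i) (Nat.iter i f a) (Nat.iter i f w) Hm).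
      rewrite (m_sym d (c i) (Nat.iter i f a)) in H by auto. lra. }
    rewrite Hi2 in A4.
    pose proof (m_tri d' (Nat.iter i g b) (h (c i)) (Nat.iter i g (h w)) Hm'). lra.
Qed.

Theorem theorem1p3 (X Y : Type) (d : X -> X -> R) (d' : Y -> Y -> R)
  (f : X -> X) (g : Y -> Y)
  (C D : X -> Prop) (C' : Y -> Prop) (h : X -> Y) (hinv : Y -> X)
  (F G : (nat -> Prop) -> Prop) (n : nat) (del : R) (a : nat -> X) :
  is_metric d -> compact_space d -> is_metric d' -> compact_space d' ->
  continuous_map d f -> continuous_map d' g ->
  chain_component d f C -> D_class d f C D -> chain_component d' g C' ->
  homeo_between d d' C C' h hinv ->
  (forall x, C x -> h (f x) = g (h x)) ->
  full_family F -> full_family G ->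
  (2 <= n)%nat -> 0 < del ->
  limit_shadowing d' g ->
  (forall j, (j < n)%nat -> Vs d f C D (a j)) ->
  scrambled d f F G n a del ->
  exists (del' : R) (b : nat -> Y), 0 < del' /\
    (forall j, (j < n)%nat ->
       Vs d' g C' (fun y => exists x, D x /\ y = h x) (b j)) /\
    scrambled d' g F G n b del'.
Proof.
  intros Hm Hcp Hm' Hcp' Hf Hg HC HD HC' Hh Hconj HF HG Hn Hdel Hls HVs [HSa HTa].
  destruct Hh as (HhC & HiC & Hhi & Hih & Hhc & Hic).
  assert (UCf : UC d d (fun _ => True) f).
  { apply unif_cont; auto. intros z _. apply I. intros x eps _ He.
    destruct (Hf x eps He) as [r [Hr1 Hr2]]. exists r. split; auto. }
  assert (UCh : UC d d' C h) by (apply unif_cont; auto; eapply cc_closed; eauto).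
  assert (UChi : UC d' d C' hinv) by (apply unif_cont; auto; eapply cc_closed; eauto).
  assert (Hinv : forall x, C x -> C (f x)) by (intros; eapply cc_inv; eauto).
  destruct (cc_nonempty d f C HC) as [c0 Hc0].
  assert (Hex : forall j, exists p : (nat -> X) * Y, (j < n)%nat ->
     (forall i, C (fst p i)) /\ tends (fun i => d (Nat.iter i f (a j)) (fst p i)) /\
     tends (fun i => d' (Nat.iter i g (snd p)) (h (fst p i)))).
  { intros j. destruct (Nat.lt_ge_cases j n) as [Hj|Hj].
    - destruct (construct d d' f g C h c0 (a j)) as [c [b [H1 [H2 H3]]]]; auto.
      + apply (HVs j Hj 1); lra.
      + exists (c, b). auto.
    - exists (fun _ => c0, h c0). intros; lia. }
  destruct (choice_fun _ Hex) as [P HP].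
  set (cs := fun j => fst (P j)). set (b := fun j => snd (P j)).
  destruct (UChi (del/2) ltac:(lra)) as [rho [Hr1 Hr2]].
  exists (rho/2), b. split; [lra|]. split.
  - intros j Hj. destruct (HP j Hj) as (H1&H2&H3).
    eapply Vs_transfer; eauto.
  - split.
    + destruct (unif_N n (fun j i => d (Nat.iter i f (a j)) (cs j i) < del/4 /\
          d' (Nat.iter i g (b j)) (h (cs j i)) < rho/4)) as [N HN].
      { intros j Hj. destruct (HP j Hj) as (H1&H2&H3).
        destruct (H2 (del/4) ltac:(lra)) as [N1 HN1]. destruct (H3 (rho/4) ltac:(lra)) as [N2 HN2].
        exists (Nat.max N1 N2). intros i Hi. split; [apply HN1|apply HN2]; lia. }
      destruct HF as [[_ [_ HFm]] HFf].
      apply (HFm _ _ (HFf _ N HSa)). intros i [Hi HiN] j k Hjk Hkn.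
      specialize (Hi j k Hjk Hkn).
      destruct (HN j ltac:(lia) i HiN) as [A1 A2]. destruct (HN k Hkn i HiN) as [B1 B2].
      apply Rnot_le_lt. intro Hc.
      destruct (HP j ltac:(lia)) as (Cj&_&_). destruct (HP k Hkn) as (Ck&_&_).
      assert (E : d' (h (cs j i)) (h (cs k i)) < rho).
      { pose proof (m_tri3 d' (h (cs j i)) (Nat.iter i g (b j)) (Nat.iter i g (b k)) (h (cs k i)) Hm').
        rewrite (m_sym d' (h (cs j i)) (Nat.iter i g (b j))) in H by auto. lra. }
      apply Hr2 in E; [|apply HhC, Cj|apply HhC, Ck].
      rewrite (Hhi (cs j i) (Cj i)), (Hhi (cs k i) (Ck i)) in E.
      pose proof (m_tri3 d (Nat.iter i f (a j)) (cs j i) (cs k i) (Nat.iter i f (a k)) Hm).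
      rewrite (m_sym d (cs k i) (Nat.iter i f (a k))) in H by auto. lra.
    + intros eps He.
      destruct (UCh (eps/3) ltac:(lra)) as [r2 [Hr21 Hr22]].
      destruct (unif_N n (fun j i => d (Nat.iter i f (a j)) (cs j i) < r2/4 /\
          d' (Nat.iter i g (b j)) (h (cs j i)) < eps/3)) as [N HN].
      { intros j Hj. destruct (HP j Hj) as (H1&H2&H3).
        destruct (H2 (r2/4) ltac:(lra)) as [N1 HN1]. destruct (H3 (eps/3) ltac:(lra)) as [N2 HN2].
        exists (Nat.max N1 N2). intros i Hi. split; [apply HN1|apply HN2]; lia. }
      destruct HG as [[_ [_ HGm]] HGf].
      apply (HGm _ _ (HGf _ N (HTa (r2/2) ltac:(lra)))). intros i [Hi HiN] j k Hjk Hkn.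
      specialize (Hi j k Hjk Hkn).
      destruct (HN j ltac:(lia) i HiN) as [A1 A2]. destruct (HN k Hkn i HiN) as [B1 B2].
      destruct (HP j ltac:(lia)) as (Cj&_&_). destruct (HP k Hkn) as (Ck&_&_).
      assert (E : d (cs j i) (cs k i) < r2).
      { pose proof (m_tri3 d (cs j i) (Nat.iter i f (a j)) (Nat.iter i f (a k)) (cs k i) Hm).
        rewrite (m_sym d (cs j i) (Nat.iter i f (a j))) in H by auto. lra. }
      apply Hr22 in E; [|apply Cj|apply Ck].
      pose proof (m_tri3 d' (Nat.iter i g (b j)) (h (cs j i)) (h (cs k i)) (Nat.iter i g (b k)) Hm').
      rewrite (m_sym d' (h (cs k i)) (Nat.iter i g (b k))) in H by auto. lra.
Qed.
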